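(* Let $\mu$ be a Borel probability measure on a standard Borel space $X$ and let $\phi$ be a continuous unitary representation of $L^0(\mu,\mathbb T)$ on a separable complex Hilbert space. Then there is a finite Borel measure $\nu$ on $X$ such that: (i) $\nu\ll\mu$ and $\phi$ is the composition of the natural homomorphism $L^0(\mu,\mathbb T)\to L^0(\nu,\mathbb T)$ with a continuous unitary representation of $L^0(\nu,\mathbb T)$; (ii) whenever $\nu'$ is a finite Borel measure on $X$ with $\nu'\ll\mu$ such that $\phi$ is the composition of the natural homomorphism $L^0(\mu,\mathbb T)\to L^0(\nu',\mathbb T)$ with a continuous unitary representation of $L^0(\nu',\mathbb T)$, we have $\nu\ll\nu'$.
   Context: $\mathbb T$ is the unit circle in $\mathbb C$. $L^0(\mu,\mathbb T)$ is the group of $\mu$-equivalence classes of measurable functions $X\to\mathbb T$ with pointwise multiplication and the topology of convergence in measure. If $\nu\ll\mu$ are finite Borel measures, the natural homomorphism $L^0(\mu,\mathbb T)\to L^0(\nu,\mathbb T)$ sends the $\mu$-class of a Borel function to its $\nu$-class (well defined since the $\nu$-class contains the $\mu$-class). Unitary representations are strongly continuous. *)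

(* Defs.v *)
From HB Require Import structures.
From mathcomp Require Import all_boot all_order all_algebra.
From mathcomp Require Import all_classical all_reals.
From mathcomp Require Import topology normedtype measure lebesgue_measure.
From mathcomp.real_closed Require Import complex.
Set Implicit Arguments. Unset Strict Implicit. Unset Printing Implicit Defensive.
Import Order.TTheory GRing.Theory Num.Theory.
Local Open Scope classical_set_scope.
Local Open Scope ring_scope.

Section Defs.
Variable R : realType.
Local Notation C := (complex R).

(* A measurable space is standard Borel if its sigma-algebra is the Borel
   sigma-algebra of some Polish (separable, completely metrizable) topology.
   We present the Polish topology by a complete separable metric [dist]. *)
Definition metric_open {X : Type} (dist : X -> X -> R) (U : set X) : Prop :=
  forall x, U x -> exists2 r : R, 0 < r & forall y, dist x y < r -> U y.

Definition standard_borel {d} (X : measurableType d) : Prop :=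
  exists dist : X -> X -> R,
    [/\
        [/\ (forall x y, 0 <= dist x y),
             (forall x y, dist x y = 0 <-> x = y),
             (forall x y, dist x y = dist y x)
           & (forall x y z, dist x z <= dist x y + dist y z)],
        (forall u : nat -> X,
           (forall e : R, 0 < e -> exists N, forall m n, (N <= m)%N -> (N <= n)%N ->
              dist (u m) (u n) < e) ->
           exists l, forall e : R, 0 < e -> exists N, forall n, (N <= n)%N -> dist (u n) l < e),
        (exists D : set X, countable D /\
           forall x (e : R), 0 < e -> exists2 y, D y & dist x y < e)
      &
        (forall A : set X, measurable A <-> <<s metric_open dist >> A)].

Definition hnorm {H : lmodType C} (ip : H -> H -> C) (v : H) : R :=
  Num.sqrt (complex.Re (ip v v)).

Definition separable_hilbert {H : lmodType C} (ip : H -> H -> C) : Prop :=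
  [/\
      [/\ (forall (a : C) (u v w : H), ip (a *: u + v) w = a * ip u w + ip v w),
           (forall u v : H, ip v u = Num.conj (ip u v)),
           (forall v : H, 0 <= ip v v)
         & (forall v : H, ip v v = 0 -> v = 0)],
      (forall u : nat -> H,
         (forall e : R, 0 < e -> exists N, forall m n, (N <= m)%N -> (N <= n)%N ->
            hnorm ip (u m - u n) < e) ->
         exists l, forall e : R, 0 < e -> exists N, forall n, (N <= n)%N ->
            hnorm ip (u n - l) < e)
    &
      (exists s : nat -> H, forall v (e : R), 0 < e -> exists n, hnorm ip (v - s n) < e)].

Definition unitary {H : lmodType C} (ip : H -> H -> C) (U : H -> H) : Prop :=
  [/\ (forall (a : C) (u v : H), U (a *: u + v) = a *: U u + U v),
      (forall w : H, exists v, U v = w)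
    & (forall u v : H, ip (U u) (U v) = ip u v)].

(* Representatives: Borel functions X -> T (T = unit circle of C).  Elements of
   L^0(nu,T) are nu-a.e. classes of these; a map on L^0(nu,T) is represented by a
   map on representatives that is constant on nu-a.e. classes. *)
Definition L0T {d} {X : measurableType d} (f : X -> C) : Prop :=
  [/\ measurable_fun setT (fun x => complex.Re (f x)),
      measurable_fun setT (fun x => complex.Im (f x))
    & forall x, `|f x| = 1].

(* continuous unitary representation of L^0(nu,T) on (H, ip), given on
   representatives; L^0(nu,T) carries the topology of convergence in measure
   (basic neighbourhoods of f: {g | nu [|f - g| > eta] < eta}), and continuity
   is strong continuity. *)
Definition unitary_rep {d} {X : measurableType d} (nu : {measure set X -> \bar R})
    {H : lmodType C} (ip : H -> H -> C) (rho : (X -> C) -> H -> H) : Prop :=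
  [/\
      (forall f g : X -> C, L0T f -> L0T g -> {ae nu, forall x, f x = g x} -> rho f = rho g),
      (forall f : X -> C, L0T f -> unitary ip (rho f)),
      (forall f g : X -> C, L0T f -> L0T g -> rho (fun x => f x * g x) = rho f \o rho g)
    &
      (forall f : X -> C, L0T f -> forall (v : H) (e : R), 0 < e ->
         exists2 eta : R, 0 < eta & forall g : X -> C, L0T g ->
           (nu [set x | ((eta%:C)%C < `|f x - g x|)%R] < eta%:E)%E ->
           hnorm ip (rho g v - rho f v) < e)].

Definition factors_through {d} {X : measurableType d} (nu : {measure set X -> \bar R})
    {H : lmodType C} (ip : H -> H -> C) (phi : (X -> C) -> H -> H) : Prop :=
  exists psi : (X -> C) -> H -> H,
    unitary_rep nu ip psi /\ (forall f : X -> C, L0T f -> phi f = psi f).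

End Defs.

(* Main.v *)
Require Import Defs.
From HB Require Import structures.
From mathcomp Require Import all_boot all_order all_algebra.
From mathcomp Require Import all_classical all_reals.
From mathcomp Require Import topology normedtype measure lebesgue_measure probability.
From mathcomp.real_closed Require Import complex.
Import Order.TTheory GRing.Theory Num.Theory.
Local Open Scope classical_set_scope.
Local Open Scope ring_scope.
From mathcomp Require Import measurable_realfun.

Lemma meas_if d (X : measurableType d) d2 (Y : measurableType d2) (S : set X) (f g : X -> Y) :
  measurable S -> measurable_fun setT f -> measurable_fun setT g ->
  measurable_fun setT (fun x => if x \in S then f x else g x).
Proof.
move=> mS mf mg _ B mB; rewrite setTI.
have -> : (fun x => if x \in S then f x else g x) @^-1` B =
  (S `&` f @^-1` B) `|` (~` S `&` g @^-1` B).
  apply/seteqP; split => x /=.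
    case: ifPn => xS Bx; [left; split=>//; exact/set_mem|right; split=>//].
    by move=> Sx; move: xS; rewrite (mem_set Sx).
  by case=> -[xS]; rewrite ?(mem_set xS) ?(memNset xS).
apply: measurableU; apply: measurableI => //; first by rewrite -[X in measurable X]setTI; exact: mf.
  exact: measurableC.
by rewrite -[X in measurable X]setTI; exact: mg.
Qed.

Arguments meas_if {d X d2 Y S f g}.
Lemma ReM (R : realType) (z w : complex R) : complex.Re (z * w) = complex.Re z * complex.Re w - complex.Im z * complex.Im w.
Proof. by case: z => a b; case: w => c e. Qed.
Lemma ImM (R : realType) (z w : complex R) : complex.Im (z * w) = complex.Re z * complex.Im w + complex.Im z * complex.Re w.
Proof. by case: z => a b; case: w => c e. Qed.
Section L0.
Variables (R : realType) (d : measure_display) (X : measurableType d).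
Local Notation C := (complex R).

Lemma normcE' (z : C) : `|z| = (Num.sqrt (complex.Re z ^+ 2 + complex.Im z ^+ 2))%:C%C.
Proof. exact: normc_def. Qed.

Lemma L0T_cst : L0T (fun _ : X => (1 : C)).
Proof.
split; [exact: measurable_cst|exact: measurable_cst|by move=> x; rewrite normr1].
Qed.

Lemma L0T_if (S : set X) (f g : X -> C) : measurable S -> L0T f -> L0T g ->
  L0T (fun x => if x \in S then f x else g x).
Proof.
move=> mS [f1 f2 f3] [g1 g2 g3]; split.
- have -> : (fun x => complex.Re (if x \in S then f x else g x)) = fun x => if x \in S then complex.Re (f x) else complex.Re (g x).
    by apply: funext => x /=; case: ifP.
  exact: (meas_if mS f1 g1).
- have -> : (fun x => complex.Im (if x \in S then f x else g x)) = fun x => if x \in S then complex.Im (f x) else complex.Im (g x).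
    by apply: funext => x /=; case: ifP.
  exact: (meas_if mS f2 g2).
- by move=> x; case: ifP.
Qed.

Lemma L0T_mul (f g : X -> C) : L0T f -> L0T g -> L0T (fun x => f x * g x).
Proof.
move=> [f1 f2 f3] [g1 g2 g3]; split.
- rewrite (_ : (fun x => _) = (fun x => complex.Re (f x)) \* (fun x => complex.Re (g x))
     \- (fun x => complex.Im (f x)) \* (fun x => complex.Im (g x))).
    by apply: measurable_funB; apply: measurable_funM.
  by apply: funext => x; rewrite ReM.
- rewrite (_ : (fun x => _) = (fun x => complex.Re (f x)) \* (fun x => complex.Im (g x))
     \+ (fun x => complex.Im (f x)) \* (fun x => complex.Re (g x))).
    by apply: measurable_funD; apply: measurable_funM.
  by apply: funext => x; rewrite ImM.
- by move=> x; rewrite normrM f3 g3 mulr1.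
Qed.

Lemma L0T_conj (f : X -> C) : L0T f -> L0T (fun x => (f x)^*%C).
Proof.
move=> [f1 f2 f3]; split.
- rewrite (_ : (fun x => _) = fun x => complex.Re (f x)) //.
  by apply: funext => x /=; case: (f x).
- rewrite (_ : (fun x => _) = \- (fun x => complex.Im (f x))).
    exact: measurable_funN.
  by apply: funext => x /=; case: (f x).
- move=> x; rewrite -(f3 x) !normcE'; congr ((_)%:C%C); congr (Num.sqrt _).
  by case: (f x) => a b /=; rewrite sqrrN.
Qed.

Lemma mulconj (z : C) : `|z| = 1 -> z * z^*%C = 1.
Proof.
move=> z1; case: z z1 => a b; rewrite normcE' /= => h.
have : Num.sqrt (a ^+ 2 + b ^+ 2) = 1 by case: h.
move=> h2; have : a ^+ 2 + b ^+ 2 = 1.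
  by rewrite -[LHS]sqr_sqrtr ?h2 ?expr1n // addr_ge0 // sqr_ge0.
move=> h3; apply/eqP; rewrite eq_complex /=; apply/andP; split; apply/eqP.
  by rewrite -h3 !expr2 mulrN opprK.
by rewrite mulrN mulrC addrC subrr.
Qed.

Lemma meas_gt (f g : X -> C) (eta : R) : L0T f -> L0T g -> 0 < eta ->
  measurable [set x | ((eta%:C)%C < `|f x - g x|)%R].
Proof.
move=> [f1 f2 f3] [g1 g2 g3] eta0.
pose F1 := fun x => complex.Re (f x) - complex.Re (g x).
pose F2 := fun x => complex.Im (f x) - complex.Im (g x).
have mF : measurable_fun setT ((fun x => F1 x ^+ 2) \+ (fun x => F2 x ^+ 2)).
  by apply: measurable_funD; apply: measurable_funX; apply: measurable_funB.
have key : forall s : R, ((eta%:C)%C < (Num.sqrt s)%:C%C) = (eta ^+ 2 < s).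
  move=> s; rewrite ltcR -{1}(@ger0_norm _ eta) ?ltW// -sqrtr_sqr.
  by rewrite ltNge ler_sqrt ?sqr_ge0// -ltNge.
have -> : [set x | ((eta%:C)%C < `|f x - g x|)%R] =
   ((fun x => F1 x ^+ 2) \+ (fun x => F2 x ^+ 2)) @^-1` `]eta ^+ 2, +oo[.
  by apply/seteqP; split => x /=; rewrite normcE' key in_itv /= andbT /F1 /F2 !raddfB.
rewrite -[X in measurable X]setTI; apply: mF => //.
Qed.

End L0.
Section Main.
Variables (R : realType) (d : measure_display) (X : measurableType d).
Local Notation C := (complex R).
Variables (mu : probability X R) (H : lmodType C) (ip : H -> H -> C).
Hypothesis Hip : separable_hilbert ip.
Variable phi : (X -> C) -> H -> H.
Hypothesis Hphi : unitary_rep mu ip phi.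

Let one := fun _ : X => (1 : C).

Lemma hnorm0 (w : H) : (forall e : R, 0 < e -> hnorm ip w < e) -> w = 0.
Proof.
move=> hw; case: Hip => -[_ _ ipge0 ipeq0] _ _; apply: ipeq0.
have h0 : hnorm ip w = 0.
  apply/eqP; rewrite eq_le sqrtr_ge0 andbT; rewrite leNgt; apply/negP => hp.
  by have := hw _ hp; rewrite ltxx.
move: h0; rewrite /hnorm => /eqP; rewrite sqrtr_eq0 => hre.
have := ipge0 w; rewrite lecE /= => /andP[/eqP him hre'].
apply/eqP; rewrite eq_complex; apply/andP; split; apply/eqP => //.
by apply/eqP; rewrite eq_le hre.
Qed.

Lemma phi_one_r (g : X -> C) : L0T g -> phi g \o phi one = phi g.
Proof.
case: Hphi => _ _ hom _ Lg.
rewrite -hom //; last exact: L0T_cst.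
by congr phi; apply: funext => x; rewrite mulr1.
Qed.

Definition famF (S : set X) := measurable S /\ forall h : X -> C, L0T h ->
  mu.-negligible (S `&` [set x | h x != 1]) -> phi h = phi one.

Lemma famF_T : famF setT.
Proof.
split => // h Lh Nh; case: Hphi => wd _ _ _.
apply: wd => //; first exact: L0T_cst.
apply: negligibleS Nh => x /= hx; split => //; apply/eqP => hx1; apply: hx.
by rewrite hx1.
Qed.

Lemma famF_I S1 S2 : famF S1 -> famF S2 -> famF (S1 `&` S2).
Proof.
move=> [mS1 F1] [mS2 F2]; split; first exact: measurableI.
move=> h Lh Nh.
pose h1 := fun x => if x \in S1 then (1 : C) else h x.
pose h2 := fun x => if x \in S1 then h x else (1 : C).
have L1 : L0T h1 by apply: L0T_if => //; exact: L0T_cst.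
have L2 : L0T h2 by apply: L0T_if => //; exact: L0T_cst.
have E1 : phi h1 = phi one.
  apply: F1 => //; apply: negligibleS (negligible_set0 mu) => x [S1x].
  by rewrite /= /h1 (mem_set S1x) eqxx.
have E2 : phi h2 = phi one.
  apply: F2 => //; apply: negligibleS Nh => x [S2x] /=; rewrite /h2.
  case: ifPn => [S1x hx|]; last by rewrite eqxx.
  by split => //; split => //; exact/set_mem.
have -> : h = fun x => h1 x * h2 x.
  by apply: funext => x; rewrite /h1 /h2; case: ifP; rewrite ?mul1r ?mulr1.
case: Hphi => _ _ hom _.
rewrite hom // E1 E2 -hom //; try exact: L0T_cst.
by congr phi; apply: funext => x; rewrite mulr1.
Qed.


Fixpoint Tn (S : nat -> set X) (N : nat) : set X :=
  if N is N'.+1 then Tn S N' `&` S N' else setT.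

Lemma TnP S N x : Tn S N x <-> forall i, (i < N)%N -> S i x.
Proof.
elim: N => [|N IH] /=; first by split.
split.
  move=> [/IH h Sx] i; rewrite ltnS leq_eqVlt => /orP[/eqP -> //|]; exact: h.
by move=> h; split; [apply/IH => i iN; apply: h; exact: ltnW | exact: h].
Qed.

Lemma famF_Tn S N : (forall n, famF (S n)) -> famF (Tn S N).
Proof.
move=> FS; elim: N => [|N IH] /=; first exact: famF_T.
exact: famF_I.
Qed.

Lemma not_lt_norm0 (eta : R) : 0 < eta -> ~ ((eta%:C)%C < `|0 : C|).
Proof. by move=> e0; rewrite normr0 ltcR ltNge (ltW e0). Qed.

Lemma famF_cap (S : nat -> set X) : (forall n, famF (S n)) -> famF (\bigcap_n S n).
Proof.
move=> FS.
have mS n : measurable (S n) by case: (FS n).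
have mTn N : measurable (Tn S N) by case: (famF_Tn S N FS).
have mT : measurable (\bigcap_n S n) by exact: bigcapT_measurable.
split => // h Lh [N0 [mN0 muN0 N0sub]].
apply: funext => v; apply/eqP; rewrite eq_sym -subr_eq0; apply/eqP.
apply: hnorm0 => e e0.
case: Hphi => _ _ _ cont.
have [eta eta0 Heta] := cont h Lh v e e0.
pose D N := Tn S N `\` \bigcap_n S n.
have mD N : measurable (D N) by apply: measurableD.
have D0 : (mu (D 0%N) < +oo)%E.
  by rewrite (le_lt_trans (probability_le1 _ _)) ?ltry.
have mDc : measurable (\bigcap_n D n) by exact: bigcapT_measurable.
have Dni : {homo D : n m / (n <= m)%N >-> (n >= m)%O}.
  move=> n m nm; apply/subsetPset => x [/TnP Tx nT]; split => //.
  by apply/TnP => i im; apply: Tx; exact: leq_trans im nm.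
have cv := nonincreasing_cvg_mu D0 mD mDc Dni.
have Dset0 : \bigcap_n D n = set0.
  apply/seteqP; split => // x /= Dx.
  have [_ nT] := Dx 0%N I; apply: nT => i _.
  by have [/TnP Ti _] := Dx i.+1 I; apply: Ti.
rewrite Dset0 measure0 in cv.
have [_ /cvgr_lt] := (fine_cvgP _ _).1 cv.
move=> /(_ eta eta0) [M _ HM].
have {HM} HM := HM M (leqnn M).
pose hM := fun x => if x \in Tn S M then (1 : C) else h x.
have LM : L0T hM by apply: L0T_if => //; exact: L0T_cst.
have EM : phi hM = phi one.
  case: (famF_Tn S M FS) => _ F; apply: F => //.
  apply: negligibleS (negligible_set0 mu) => x [Tx] /=.
  by rewrite /hM (mem_set Tx) eqxx.
have := Heta hM LM.
rewrite EM; apply.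
have mA : measurable [set x | ((eta%:C)%C < `|h x - hM x|)%R] by exact: meas_gt.
have sub : [set x | ((eta%:C)%C < `|h x - hM x|)%R] `<=` D M `|` N0.
  move=> x /=; rewrite /hM; case: ifPn => [/set_mem Tx|]; last first.
    by rewrite subrr => _ /(@not_lt_norm0 eta eta0).
  move=> hx.
  have h1 : h x != 1 by apply/negP => /eqP h1; move: hx; rewrite h1 subrr => /(@not_lt_norm0 eta eta0).
  have [Tall|nTall] := pselect ((\bigcap_n S n) x).
    by right; apply: N0sub; split.
  by left; split.
apply: (le_lt_trans (le_measure _ _ _ sub)); rewrite ?inE //; first exact: measurableU.
apply: (le_lt_trans (measureU2 _ _ _)) => //.
have -> : forall z : \bar R, (z + mu N0 = z + 0)%E by move=> z; congr (_ + _)%E; exact: muN0.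
rewrite addr0 -[X in (X < _)%E]fineK ?lte_fin; first exact: HM.
exact: fin_num_measure.

Qed.

Lemma famF_min : exists T, famF T /\ forall S, famF S -> mu (T `\` S) = 0%E.
Proof.
pose E := [set r : R | exists2 S, famF S & r = fine (mu S)].
have hE : has_inf E.
  split; first by exists (fine (mu setT)); exists setT => //; exact: famF_T.
  exists 0 => r [S _ ->]; exact: fine_ge0.
pose m := inf E.
have : forall n : nat, exists S, famF S /\ fine (mu S) < m + n.+1%:R^-1.
  move=> n; have n0 : 0 < n.+1%:R^-1 :> R by rewrite invr_gt0.
  have [r [S FS ->] hr] := inf_adherent n0 hE.
  by exists S.
move=> /choice [Sn HSn].
have FSn n : famF (Sn n) by case: (HSn n).
have mSn n : measurable (Sn n) by case: (FSn n).
pose T := \bigcap_n Sn n.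
have FT : famF T by exact: famF_cap.
have mT : measurable T by case: FT.
exists T; split => // S FS.
have mS : measurable S by case: FS.
have FTS : famF (T `&` S) by exact: famF_I.
have mTS : measurable (T `&` S) by exact: measurableI.
have mTD : measurable (T `\` S) by exact: measurableD.
have fin A : measurable A -> mu A \is a fin_num by move=> mA; exact: fin_num_measure.
have a0 : 0 <= fine (mu (T `\` S)) by exact: fine_ge0.
have hsplit : fine (mu T) = fine (mu (T `\` S)) + fine (mu (T `&` S)).
  by rewrite (measureDI _ mT mS) fineD // ?fin.
have hm : m <= fine (mu (T `&` S)) by apply: (ge_inf hE.2); exists (T `&` S).
have hT k : fine (mu T) < m + k.+1%:R^-1.
  apply: le_lt_trans (proj2 (HSn k)).
  apply: fine_le; rewrite ?fin //; apply: le_measure; rewrite ?inE //.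
  by move=> x Tx; exact: Tx.
have : fine (mu (T `\` S)) <= 0.
  rewrite leNgt; apply/negP => /ltr_add_invr [k]; rewrite add0r => hk.
  have := hT k; rewrite hsplit => h1.
  have : fine (mu (T `\` S)) < k.+1%:R^-1.
    by rewrite -(ltrD2r (fine (mu (T `&` S)))) (lt_le_trans h1) // [leRHS]addrC lerD2r.
  by rewrite ltNge (ltW hk).
move=> a1; have a00 : fine (mu (T `\` S)) = 0 by apply/eqP; rewrite eq_le a1 a0.
by rewrite -[LHS]fineK ?fin // a00.
Qed.

Lemma main_sec : exists nu : {finite_measure set X -> \bar R},
    [/\ nu `<< mu,
        factors_through nu ip phi
      & forall nu' : {finite_measure set X -> \bar R},
          nu' `<< mu -> factors_through nu' ip phi -> nu `<< nu'].
Proof.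
have [T [FT Tmin]] := famF_min.
have mT : measurable T by case: FT.
have Too : (mu T < +oo)%E by rewrite (le_lt_trans (probability_le1 _ _)) ?ltry.
pose nu : {finite_measure set X -> \bar R} := mfrestr mT Too.
have nuE A : nu A = mu (A `&` T) by [].
case: Hphi => wd un hom cont.
have wdnu : forall f g : X -> C, L0T f -> L0T g -> {ae nu, forall x, f x = g x} -> phi f = phi g.
  move=> f g Lf Lg [A [mA nuA sub]].
  pose h := fun x => f x * (g x)^*%C.
  have Lh : L0T h by apply: L0T_mul => //; exact: L0T_conj.
  have Eh : phi h = phi one.
    case: FT => _ FT; apply: FT => //.
    exists (A `&` T); split; first exact: measurableI.
      by rewrite -nuE.
    move=> x [Tx hx]; split => //; apply: sub => /= fg; move: hx.
    by rewrite /h /= fg mulconj ?eqxx //; case: Lg.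
  have -> : f = fun x => g x * h x.
    apply: funext => x; rewrite /h mulrCA mulconj ?mulr1 //; by case: Lg.
  by rewrite hom // Eh phi_one_r.
exists nu; split.
- move=> N muN A mA AN; rewrite nuE; apply: muN; first exact: measurableI.
  by move=> x [/AN].
- exists phi; split => //; split => //.
  move=> f Lf v e e0.
  have [eta eta0 Heta] := cont f Lf v e e0.
  exists eta => // g Lg hnu.
  pose g' := fun x => if x \in T then g x else f x.
  have Lg' : L0T g' by exact: L0T_if.
  have Eg' : phi g' = phi g.
    apply: wdnu => //; exists (~` T); split; first exact: measurableC.
      by rewrite nuE setICl measure0.
    move=> x /= ng Tx; apply: ng; by rewrite /g' (mem_set Tx).
  rewrite -Eg'; apply: Heta => //.
  suff -> : [set x | ((eta%:C)%C < `|f x - g' x|)%R] = [set x | ((eta%:C)%C < `|f x - g x|)%R] `&` T.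
    exact: hnu.
  apply/seteqP; split => x /=; rewrite /g'.
    case: ifPn => [/set_mem Tx h1|_]; first by split.
    by rewrite subrr => /(@not_lt_norm0 eta eta0).
  by move=> [h1 Tx]; rewrite (mem_set Tx).
- move=> nu' numu [psi [[wd' _ _ _] Epsi]].
  move=> N nuN A mA AN; rewrite nuE.
  have nu'A : nu' A = 0%E by apply: nuN.
  have FA : famF (~` A).
    split; first exact: measurableC.
    move=> h Lh [B [mB muB sub]].
    have nu'B : nu' B = 0%E.
      apply: (numu B) => //; first by apply/measure0_null_setP.
    rewrite !Epsi //; last exact: L0T_cst.
    apply: wd' => //; first exact: L0T_cst.
    apply: (@negligibleS _ _ _ nu' (A `|` B)); last first.
      apply: negligibleU; [exists A | exists B]; by split.
    move=> x /= hx; have [Ax|nAx] := pselect (A x); first by left.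
    right; apply: sub; split => //; apply/eqP => h1; exact: hx.
  have := Tmin _ FA.
  by rewrite setDE setCK setIC.
Qed.

End Main.

Theorem mainTheorem2 (R : realType) (d : measure_display) (X : measurableType d)
    (HX : standard_borel R X) (mu : probability X R)
    (H : lmodType (complex R)) (ip : H -> H -> complex R) (Hip : separable_hilbert ip)
    (phi : (X -> complex R) -> H -> H) (Hphi : unitary_rep mu ip phi) :
  exists nu : {finite_measure set X -> \bar R},
    [/\ nu `<< mu,
        factors_through nu ip phi
      & forall nu' : {finite_measure set X -> \bar R},
          nu' `<< mu -> factors_through nu' ip phi -> nu `<< nu'].
Proof. exact: (@main_sec R d X mu H ip Hip phi Hphi). Qed.
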